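(* A finite graph $G$ is isomorphic to $\mathrm{SG}^+(P,W)$ for some finite point sets $P,W$ in the plane such that no two distinct points of $P\cup W$ have equal $x$-coordinate or equal $y$-coordinate, if and only if $G$ is a permutation graph. Moreover, every such square graph is isomorphic to $\mathrm{SG}^+(P',W')$ for some such sets with $|W'|\le 1$.
   Context: For finite point sets $P$ (vertices) and $W$ (witnesses) in $\mathbb{R}^2$ (which may share points), the square graph $\mathrm{SG}^+(P,W)$ is the graph with vertex set $P$ in which distinct $x,y\in P$ are adjacent if and only if there is an axis-aligned square with $x$ and $y$ on its boundary whose interior contains at least one point of $W$. A point $a$ dominates $b$ if $x(a)\ge x(b)$ and $y(a)\ge y(b)$. A graph $G$ is a permutation graph if there exist a finite set $S\subset\mathbb{R}^2$ with pairwise distinct $x$-coordinates and pairwise distinct $y$-coordinates and a bijection $f:V(G)\to S$ such that distinct $u,v$ are adjacent iff one of $f(u),f(v)$ dominates the other (equivalently, $G$ is the comparability graph of a partial order of dimension at most $2$). *)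

(* Defs.v *)
From mathcomp Require Import all_boot.
From Stdlib Require Import Reals List.
Set Implicit Arguments.
Unset Strict Implicit.
Open Scope R_scope.

Definition pt := (R * R)%type.

Definition dominates (a b : pt) : Prop := fst b <= fst a /\ snd b <= snd a.

Definition on_sq_boundary (a b s : R) (p : pt) : Prop :=
  a <= fst p <= a + s /\ b <= snd p <= b + s /\
  (fst p = a \/ fst p = a + s \/ snd p = b \/ snd p = b + s).

Definition in_sq_interior (a b s : R) (w : pt) : Prop :=
  a < fst w < a + s /\ b < snd w < b + s.

Definition sq_adj (W : list pt) (x y : pt) : Prop :=
  exists a b s : R, 0 < s /\ on_sq_boundary a b s x /\ on_sq_boundary a b s y /\
    exists w, In w W /\ in_sq_interior a b s w.

Definition general_position (L : list pt) : Prop :=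
  forall u v, In u L -> In v L -> u <> v -> fst u <> fst v /\ snd u <> snd v.

(* G is isomorphic to SG^+(P,W) where P is the image of the injective map f,
   and P u W is in general position *)
Definition square_graph_rep {T : finType} (G : rel T) (f : T -> pt) (W : list pt) : Prop :=
  injective f /\
  general_position (List.map f (enum T) ++ W) /\
  (forall u v : T, u <> v -> (G u v <-> sq_adj W (f u) (f v))).

Definition permutation_graph {T : finType} (G : rel T) : Prop :=
  exists f : T -> pt,
    (forall u v : T, u <> v -> fst (f u) <> fst (f v) /\ snd (f u) <> snd (f v)) /\
    (forall u v : T, u <> v -> (G u v <-> dominates (f u) (f v) \/ dominates (f v) (f u))).

(* Main.v *)
Require Import Defs.
From mathcomp Require Import all_boot.
From Stdlib Require Import Reals List Lra Lia ClassicalEpsilon Classical.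
Open Scope R_scope.
Set Implicit Arguments.
Unset Strict Implicit.

Definition lt2 (a b : pt) : Prop := fst a < fst b /\ snd a < snd b.
Definition ul (a b : pt) : Prop := fst a < fst b /\ snd b < snd a.
Definition gp (a b : pt) : Prop := fst a <> fst b /\ snd a <> snd b.
Definition gpw (w x : pt) : Prop := w = x \/ gp w x.
Definition Nw (w x y : pt) : Prop :=
  w = x \/ w = y \/ (lt2 x y /\ (lt2 w x \/ lt2 y w)) \/ (lt2 y x /\ (lt2 w y \/ lt2 x w))
  \/ (ul x y /\ (ul w x \/ ul y w)) \/ (ul y x /\ (ul w y \/ ul x w)).
Definition Aw (w x y : pt) : Prop := exists a b s : R, 0 < s /\ on_sq_boundary a b s x /\
  on_sq_boundary a b s y /\ in_sq_interior a b s w.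

Lemma pt_eq (a b : pt) : fst a = fst b -> snd a = snd b -> a = b.
Proof. destruct a, b; simpl; intros; subst; auto. Qed.

Lemma Aw_Nw w x y : Aw w x y -> ~ Nw w x y.
Proof.
  intros [a [b [s [hs [hx [hy hw]]]]]].
  destruct x as [x1 x2], y as [y1 y2], w as [w1 w2].
  unfold on_sq_boundary, in_sq_interior, Nw, lt2, ul in *; simpl in *.
  intro H.
  destruct hw as [[hw1 hw1'] [hw2 hw2']].
  destruct hx as [[hx1 hx1'] [[hx2 hx2'] hxe]].
  destruct hy as [[hy1 hy1'] [[hy2 hy2'] hye]].
  destruct H as [H|[H|[H|[H|[H|H]]]]];
  try (injection H; intros; subst; lra);
  destruct H as [[h1 h2] [[h3 h4]|[h3 h4]]];
  destruct hxe as [e|[e|[e|e]]]; destruct hye as [e'|[e'|[e'|e']]]; lra.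
Qed.

Lemma Aw_sym w x y : Aw w x y -> Aw w y x.
Proof. intros [a [b [s [h1 [h2 [h3 h4]]]]]]. exists a, b, s; tauto. Qed.
Lemma Nw_sym_iff w x y : Nw w y x <-> Nw w x y.
Proof. unfold Nw. tauto. Qed.
Lemma Nw_sym w x y : Nw w x y -> Nw w y x.
Proof. unfold Nw. tauto. Qed.

Lemma tetra (x y : pt) : gp x y -> lt2 x y \/ lt2 y x \/ ul x y \/ ul y x.
Proof.
  destruct x as [x1 x2], y as [y1 y2]; unfold gp, lt2, ul; simpl. intros [h1 h2].
  destruct (Rtotal_order x1 y1) as [a|[a|a]]; [|tauto|];
  destruct (Rtotal_order x2 y2) as [b|[b|b]]; try tauto.
Qed.

Lemma NNw_Aw_lt w x y : gp w x -> gp w y -> lt2 x y -> ~ Nw w x y -> Aw w x y.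
Proof.
  destruct x as [x1 x2], y as [y1 y2], w as [w1 w2].
  unfold gp, Nw, lt2, ul, Aw, on_sq_boundary, in_sq_interior; simpl.
  intros [g1 g2] [g3 g4] [l1 l2] hN.
  assert (n1: ~ (w1 < x1 /\ w2 < x2)) by tauto.
  assert (n2: ~ (y1 < w1 /\ y2 < w2)) by tauto.
  assert (H: (x1 < w1 /\ w2 < y2) \/ (w1 < y1 /\ x2 < w2)).
  { destruct (Rtotal_order w1 x1) as [a|[a|a]]; [|lra|];
    destruct (Rtotal_order w2 x2) as [b|[b|b]]; try lra;
    destruct (Rtotal_order w1 y1) as [c|[c|c]]; try lra;
    destruct (Rtotal_order w2 y2) as [d|[d|d]]; try lra. }
  destruct H as [[h1 h2]|[h1 h2]].
  - set (s := (y1-x1)+(y2-x2)+(w1-x1)+(y2-w2)).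
    exists x1, (y2 - s), s. unfold s; repeat split; lra.
  - set (s := (y1-x1)+(y2-x2)+(y1-w1)+(w2-x2)).
    exists (y1 - s), x2, s. unfold s; repeat split; lra.
Qed.

Lemma NNw_Aw_ul w x y : gp w x -> gp w y -> ul x y -> ~ Nw w x y -> Aw w x y.
Proof.
  destruct x as [x1 x2], y as [y1 y2], w as [w1 w2].
  unfold gp, Nw, lt2, ul, Aw, on_sq_boundary, in_sq_interior; simpl.
  intros [g1 g2] [g3 g4] [l1 l2] hN.
  assert (n1: ~ (w1 < x1 /\ x2 < w2)) by tauto.
  assert (n2: ~ (y1 < w1 /\ w2 < y2)) by tauto.
  assert (H: (x1 < w1 /\ y2 < w2) \/ (w1 < y1 /\ w2 < x2)).
  { destruct (Rtotal_order w1 x1) as [a|[a|a]]; [|lra|];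
    destruct (Rtotal_order w2 x2) as [b|[b|b]]; try lra;
    destruct (Rtotal_order w1 y1) as [c|[c|c]]; try lra;
    destruct (Rtotal_order w2 y2) as [d|[d|d]]; try lra. }
  destruct H as [[h1 h2]|[h1 h2]].
  - set (s := (y1-x1)+(x2-y2)+(w1-x1)+(w2-y2)).
    exists x1, y2, s. unfold s; repeat split; lra.
  - set (s := (y1-x1)+(x2-y2)+(y1-w1)+(x2-w2)).
    exists (y1 - s), (x2 - s), s. unfold s; repeat split; lra.
Qed.

Lemma Aw_iff w x y : gp x y -> gpw w x -> gpw w y -> (Aw w x y <-> ~ Nw w x y).
Proof.
  intros hxy hx hy. split; [apply Aw_Nw|]. intro hN.
  assert (gx: gp w x) by (destruct hx as [e|e]; [exfalso; apply hN; left; auto|auto]).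
  assert (gy: gp w y) by (destruct hy as [e|e]; [exfalso; apply hN; right; left; auto|auto]).
  destruct (tetra hxy) as [h|[h|[h|h]]].
  - apply NNw_Aw_lt; auto.
  - apply Aw_sym, NNw_Aw_lt; auto. intro c; apply hN, Nw_sym, c.
  - apply NNw_Aw_ul; auto.
  - apply Aw_sym, NNw_Aw_ul; auto. intro c; apply hN, Nw_sym, c.
Qed.

Lemma sq_adj_iff W x y : gp x y -> (forall w, In w W -> gpw w x /\ gpw w y) ->
  (sq_adj W x y <-> exists w, In w W /\ ~ Nw w x y).
Proof.
  intros hxy hW. unfold sq_adj. split.
  - intros [a [b [s [hs [hx [hy [w [hw hi]]]]]]]]. exists w; split; auto.
    apply Aw_Nw. exists a, b, s; auto.
  - intros [w [hw hN]]. destruct (hW w hw) as [g1 g2].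
    apply (proj2 (@Aw_iff w x y hxy g1 g2)) in hN. destruct hN as [a [b [s [h1 [h2 [h3 h4]]]]]].
    exists a, b, s; split; [auto|split; [auto|split; [auto|exists w; auto]]].
Qed.
Definition bP (P : Prop) : bool := if excluded_middle_informative P then true else false.
Lemma bPT (P : Prop) : bP P = true <-> P.
Proof. unfold bP; destruct (excluded_middle_informative P); split; intros; auto; discriminate. Qed.
Lemma bPF (P : Prop) : bP P = false <-> ~ P.
Proof. unfold bP; destruct (excluded_middle_informative P); split; intros; auto; try discriminate; contradiction. Qed.

Lemma bPt (P : Prop) : bP P = true -> P.
Proof. apply bPT. Qed.
Lemma bPf (P : Prop) : bP P = false -> ~ P.
Proof. apply bPF. Qed.

Definition cntl {A : Type} (l : list A) (P : A -> Prop) : nat := count (fun x => bP (P x)) l.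

Lemma cntl_cons {A} (a : A) l P : cntl (a :: l) P = Nat.add (if bP (P a) then 1%nat else 0%nat) (cntl l P).
Proof. reflexivity. Qed.

Lemma cntl_nil {A} (P : A -> Prop) : cntl nil P = 0%nat.
Proof. reflexivity. Qed.

Lemma cntl_ext {A} (l : list A) P Q : (forall x, In x l -> (P x <-> Q x)) -> cntl l P = cntl l Q.
Proof.
  induction l as [|a l IH]; intros h; [reflexivity|].
  rewrite !cntl_cons IH; [|intros; apply h; simpl; auto].
  destruct (bP (P a)) eqn:e1; destruct (bP (Q a)) eqn:e2; auto;
  [apply bPt in e1; apply bPf in e2 | apply bPf in e1; apply bPt in e2];
  exfalso; pose proof (h a (in_eq _ _)); tauto.
Qed.

Lemma cntl_split {A} (l : list A) P Q : (forall x, In x l -> P x -> Q x) ->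
  cntl l Q = Nat.add (cntl l P) (cntl l (fun x => Q x /\ ~ P x)).
Proof.
  induction l as [|a l IH]; intros h; [reflexivity|].
  rewrite !cntl_cons IH; [|intros; apply h; simpl; auto].
  pose proof (h a (in_eq _ _)) as ha.
  destruct (bP (P a)) eqn:e1; destruct (bP (Q a)) eqn:e2;
  destruct (bP (Q a /\ ~ P a)) eqn:e3;
  repeat match goal with
  | H : bP _ = true |- _ => apply bPt in H
  | H : bP _ = false |- _ => apply bPf in H end; try tauto; simpl; rewrite -?plusE; lia.
Qed.

Lemma cntl_zero {A} (l : list A) P : cntl l P = 0%nat <-> (forall x, In x l -> ~ P x).
Proof.
  induction l as [|a l IH]; [split; [intros _ x []|reflexivity]|].
  rewrite cntl_cons. destruct (bP (P a)) eqn:e.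
  - apply bPt in e. split; [intro h; lia|]. intro h. exfalso; apply (h a); simpl; auto.
  - apply bPf in e. split.
    + intros h x [<-|hx]; auto. apply IH; auto.
    + intros h. apply IH. intros; apply h; simpl; auto.
Qed.

Lemma cntl_pos {A} (l : list A) P x : In x l -> P x -> (0 < cntl l P)%coq_nat.
Proof.
  intros hx hp. destruct (cntl l P) eqn:e; [|lia].
  apply cntl_zero with (x:=x) in e; tauto.
Qed.

Lemma cntl_le {A} (l : list A) P : (cntl l P <= length l)%coq_nat.
Proof.
  induction l as [|a l IH]; [simpl; lia|]. rewrite cntl_cons; simpl.
  destruct (bP (P a)); lia.
Qed.

Lemma cntl_mono {A} (l : list A) P Q : (forall x, In x l -> P x -> Q x) -> (cntl l P <= cntl l Q)%coq_nat.
Proof. intro h. rewrite (@cntl_split _ l P Q h). lia. Qed.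

Lemma in_enum (T : finType) (u : T) : In u (enum T).
Proof.
  have: u \in enum T by rewrite mem_enum.
  elim: (enum T) => [|a l IH] //=. rewrite seq.in_cons. case/orP => [/eqP ->|h]; [left|right; apply IH]; auto.
Qed.

Lemma cntl_enum1 (T : finType) (a : T) : cntl (enum T) (fun x => x = a) = 1%nat.
Proof.
  rewrite /cntl. rewrite (@eq_count _ _ (pred1 a)).
  - by rewrite (count_uniq_mem a (enum_uniq T)) mem_enum.
  - move=> x /=. case e: (bP (x = a)).
    + apply bPt in e. by rewrite e eqxx.
    + apply bPf in e. symmetry. apply/eqP. auto.
Qed.

Lemma cntl_plus1 (T : finType) (a : T) P Q : (forall x, Q x <-> P x \/ x = a) -> ~ P a ->
  cntl (enum T) Q = Nat.add (cntl (enum T) P) 1.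
Proof.
  intros h hn. rewrite (@cntl_split _ _ P Q); [|intros x _ hp; apply h; auto].
  rewrite -(@cntl_enum1 T a). f_equal. apply cntl_ext. intros x _. rewrite h.
  split; [intros [[?|?] ?]; tauto|intros ->; tauto].
Qed.
Definition sgm (t : R) : R := (1 + t / (1 + Rabs t)) / 2.

Lemma sgm_aux t : -1 < t / (1 + Rabs t) < 1.
Proof.
  assert (H: 0 < 1 + Rabs t) by (pose proof (Rabs_pos t); lra).
  split.
  - apply (Rmult_lt_reg_r (1 + Rabs t)); auto.
    unfold Rdiv; rewrite Rmult_assoc Rinv_l; [|lra].
    destruct (Rcase_abs t) as [h|h]; [rewrite Rabs_left|rewrite Rabs_right]; lra.
  - apply (Rmult_lt_reg_r (1 + Rabs t)); auto.
    unfold Rdiv; rewrite Rmult_assoc Rinv_l; [|lra].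
    destruct (Rcase_abs t) as [h|h]; [rewrite Rabs_left|rewrite Rabs_right]; lra.
Qed.

Lemma sgm_bounds t : 0 < sgm t < 1.
Proof. pose proof (sgm_aux t). unfold sgm. lra. Qed.

Lemma sgm_lt a b : a < b -> sgm a < sgm b.
Proof.
  intro h. unfold sgm.
  assert (Ha: 0 < 1 + Rabs a) by (pose proof (Rabs_pos a); lra).
  assert (Hb: 0 < 1 + Rabs b) by (pose proof (Rabs_pos b); lra).
  assert (a / (1 + Rabs a) < b / (1 + Rabs b)).
  { unfold Rdiv. apply (Rmult_lt_reg_r ((1 + Rabs a) * (1 + Rabs b))). nra.
    replace (a * / (1 + Rabs a) * ((1 + Rabs a) * (1 + Rabs b))) with (a * (1 + Rabs b)) by (field; lra).
    replace (b * / (1 + Rabs b) * ((1 + Rabs a) * (1 + Rabs b))) with (b * (1 + Rabs a)) by (field; lra).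
    destruct (Rcase_abs a) as [h1|h1]; [rewrite (Rabs_left a)|rewrite (Rabs_right a)]; auto;
    destruct (Rcase_abs b) as [h2|h2]; [rewrite (Rabs_left b)|rewrite (Rabs_right b)|rewrite (Rabs_left b)|rewrite (Rabs_right b)]; auto; nra. }
  lra.
Qed.

Lemma lt2_trans a b c : lt2 a b -> lt2 b c -> lt2 a c.
Proof. unfold lt2; lra. Qed.
Lemma lt2_irr a : ~ lt2 a a.
Proof. unfold lt2; lra. Qed.
Lemma lt2_asym a b : lt2 a b -> ~ lt2 b a.
Proof. unfold lt2; lra. Qed.
Lemma lt2_nul a b : lt2 a b -> ~ ul a b /\ ~ ul b a.
Proof. unfold lt2, ul; lra. Qed.
Lemma ul_trans a b c : ul a b -> ul b c -> ul a c.
Proof. unfold ul; lra. Qed.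
Lemma ul_asym a b : ul a b -> ~ ul b a.
Proof. unfold ul; lra. Qed.
Lemma ul_irr a : ~ ul a a.
Proof. unfold ul; lra. Qed.
Lemma lt2_neq a b : lt2 a b -> a <> b.
Proof. intros h e; subst; apply (lt2_irr h). Qed.
Lemma ul_neq a b : ul a b -> a <> b.
Proof. intros h e; subst; apply (ul_irr h). Qed.

Definition comp (a b : pt) : Prop := lt2 a b \/ lt2 b a.


Lemma odd_add1 n : odd (Nat.add n 1) = ~~ odd n.
Proof. rewrite Nat.add_1_r. reflexivity. Qed.

Ltac rl := repeat match goal with
 | H : (?a < ?b)%coq_nat |- _ => let h := fresh "r" in
     assert (h : INR a + 1 <= INR b) by (rewrite <- S_INR; apply le_INR; exact H); clear H
 | H : (?a <= ?b)%coq_nat |- _ => apply le_INR in H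
 | H : @eq nat ?a ?b |- _ => apply (f_equal INR) in H
 end.

Ltac cmp_tac := first [left; unfold lt2; simpl; split; lra | right; unfold lt2; simpl; split; lra].
Ltac ncmp_tac := let c := fresh in intros [c|c]; unfold lt2 in c; simpl in c; lra.
Ltac gp_tac := unfold gp; simpl; split; intro; lra.

Lemma comp_sym a b : comp a b -> comp b a.
Proof. unfold comp; tauto. Qed.
Lemma gp_sym a b : gp a b -> gp b a.
Proof. unfold gp; intros [h1 h2]; split; auto. Qed.

Section Comb.
Variable T : finType.
Variable p : T -> pt.
Variable W : list pt.
Hypothesis pgp : forall u v, u <> v -> gp (p u) (p v).
Hypothesis wgp : forall u w, In w W -> gpw w (p u).

Definition N u v := forall w, In w W -> Nw w (p u) (p v).
Definition Cc u := forall w, In w W -> w = p u \/ lt2 w (p u) \/ lt2 (p u) w.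
Definition Ic u := forall w, In w W -> w = p u \/ ul w (p u) \/ ul (p u) w.
Definition sh u := In (p u) W.
Definition Co u := Cc u /\ ~ Ic u.
Definition lo u := cntl W (fun w => lt2 w (p u)).
Definition hi u := Nat.add (lo u) (cntl W (fun w => w = p u)).
Definition S u t := sh t /\ Co t /\ (t = u \/ lt2 (p t) (p u)).
Definition cp u := cntl (enum T) (S u).

Lemma pneq u v : u <> v -> p u <> p v.
Proof. intros h e. destruct (pgp h) as [h1 _]. apply h1; rewrite e; auto. Qed.

Lemma N_sym u v : N u v -> N v u.
Proof. intros h w hw. apply Nw_sym, h, hw. Qed.

Lemma hi_eq u : hi u = cntl W (fun w => w = p u \/ lt2 w (p u)).
Proof.
  rewrite (@cntl_split _ W (fun w => lt2 w (p u))); [|intros; tauto].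
  unfold hi, lo. f_equal. apply cntl_ext. intros w _. split.
  - intro e; subst; split; [left; auto|apply lt2_irr].
  - intros [[e|h] n]; auto; contradiction.
Qed.

Lemma hi_len u : (hi u <= length W)%coq_nat.
Proof. rewrite hi_eq. apply cntl_le. Qed.
Lemma lo_hi u : (lo u <= hi u)%coq_nat.
Proof. unfold hi; lia. Qed.
Lemma sh_lt u : sh u -> (lo u < hi u)%coq_nat.
Proof. intro h. unfold hi. pose proof (@cntl_pos _ W (fun w => w = p u) (p u) h (Logic.eq_refl (p u))). lia. Qed.
Lemma nsh_eq u : ~ sh u -> hi u = lo u.
Proof.
  intro h. unfold hi. assert (cntl W (fun w => w = p u) = 0%nat); [|lia].
  apply cntl_zero. intros x hx e; subst; contradiction.
Qed.

Lemma K1 u v : Cc u -> Cc v -> lt2 (p u) (p v) ->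
  (hi u <= lo v)%coq_nat /\ (N u v <-> hi u = lo v).
Proof.
  intros cu cv l.
  set (X := fun w => w = p u \/ lt2 w (p u)).
  assert (e2 : lo v = Nat.add (hi u) (cntl W (fun w => lt2 w (p v) /\ ~ X w))).
  { rewrite hi_eq. apply cntl_split. intros w _ [e|h]; [subst; auto|eapply lt2_trans; eauto]. }
  split; [lia|].
  rewrite e2. split.
  - intro hN. assert (cntl W (fun w => lt2 w (p v) /\ ~ X w) = 0%nat); [|lia].
    apply cntl_zero. intros w hw [h1 h2]. unfold X in h2.
    destruct (hN w hw) as [e|[e|[[_ [h|h]]|[[h _]|[[h _]|[h _]]]]]].
    + tauto.
    + subst; apply (lt2_irr h1).
    + tauto.
    + apply (lt2_asym h h1).
    + apply (lt2_asym l h).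
    + pose proof (lt2_nul l); tauto.
    + pose proof (lt2_nul l); tauto.
  - intro e. assert (ez : cntl W (fun w => lt2 w (p v) /\ ~ X w) = 0%nat) by lia.
    rewrite cntl_zero in ez. intros w hw. pose proof (ez w hw) as hz. unfold X in hz.
    destruct (cu w hw) as [e1|[e1|e1]]; [left; auto|do 2 right; left; split; auto|].
    destruct (cv w hw) as [e3|[e3|e3]]; [right; left; auto| |do 2 right; left; split; auto].
    exfalso; apply hz; split; auto. intros [e4|e4]; [subst; apply (lt2_irr e1)|apply (lt2_asym e1 e4)].
Qed.

Lemma Nw_lt2 w x y : lt2 x y -> Nw w x y <-> (w = x \/ w = y \/ lt2 w x \/ lt2 y w).
Proof.
  intro l. pose proof (lt2_asym l). pose proof (lt2_nul l). unfold Nw; tauto.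
Qed.
Lemma Nw_ul w x y : ul x y -> Nw w x y <-> (w = x \/ w = y \/ ul w x \/ ul y w).
Proof.
  intro l. pose proof (ul_asym l).
  assert (~ lt2 x y /\ ~ lt2 y x) by (unfold ul, lt2 in *; lra). unfold Nw; tauto.
Qed.

Lemma K2 u v : Cc u -> Cc v -> ~ Ic u -> ul (p u) (p v) \/ ul (p v) (p u) -> ~ N u v.
Proof.
  intros cu cv ni hul hN. apply ni. intros w hw.
  destruct (classic (w = p u \/ ul w (p u) \/ ul (p u) w)) as [?|hn]; auto. exfalso.
  assert (hx : lt2 w (p u) \/ lt2 (p u) w) by (destruct (cu w hw) as [e|[e|e]]; tauto).
  assert (nx : ~ ul w (p u) /\ ~ ul (p u) w) by (destruct hx as [e|e]; pose proof (lt2_nul e); tauto).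
  assert (ny : w <> p v /\ ~ ul w (p v) /\ ~ ul (p v) w).
  { destruct (cv w hw) as [e|[e|e]].
    - subst. destruct hul as [h|h]; destruct hx as [e|e]; pose proof (lt2_nul e); tauto.
    - split; [intro q; rewrite q in e; apply (lt2_irr e)|pose proof (lt2_nul e); tauto].
    - split; [intro q; rewrite q in e; apply (lt2_irr e)|pose proof (lt2_nul e); tauto]. }
  pose proof (hN w hw) as hh.
  destruct hul as [h|h].
  - apply (Nw_ul w h) in hh. tauto.
  - apply Nw_sym in hh. apply (Nw_ul w h) in hh. tauto.
Qed.

Lemma N1c u v : N u v -> lt2 (p u) (p v) -> Cc u /\ Cc v.
Proof.
  intros hN l. split; intros w hw; pose proof (hN w hw) as h; apply (Nw_lt2 w l) in h;
  destruct h as [e|[e|[e|e]]]; subst; auto.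
  - right; right; eapply lt2_trans; eauto.
  - right; left; eapply lt2_trans; eauto.
Qed.

Lemma N1i u v : N u v -> ul (p u) (p v) -> Ic u /\ Ic v.
Proof.
  intros hN l. split; intros w hw; pose proof (hN w hw) as h; apply (Nw_ul w l) in h;
  destruct h as [e|[e|[e|e]]]; subst; auto.
  - right; right; eapply ul_trans; eauto.
  - right; left; eapply ul_trans; eauto.
Qed.

Lemma CB u : Cc u -> Ic u -> forall w, In w W -> w = p u.
Proof.
  intros c i w hw. destruct (c w hw) as [e|[e|e]]; auto;
  destruct (i w hw) as [f|[f|f]]; auto; exfalso;
  pose proof (lt2_nul e); tauto.
Qed.


Lemma H1 t u : sh t -> Cc u -> t <> u -> lt2 (p t) (p u) \/ lt2 (p u) (p t).
Proof.
  intros st cu n. destruct (cu (p t) st) as [e|[e|e]]; auto.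
  exfalso; apply (pneq n e).
Qed.

Lemma K1c u v : Cc u -> Cc v -> lt2 (p u) (p v) -> (hi u <= lo v)%coq_nat.
Proof. intros a b c; apply (K1 a b c). Qed.

Lemma P1 u v : Co u -> Co v -> ~ sh u -> ~ sh v -> hi u = hi v -> cp u = cp v.
Proof.
  intros [cu _] [cv _] su sv e. unfold cp. apply cntl_ext. intros t _.
  unfold S. split.
  - intros [st [ct [q|q]]]; [subst; contradiction|]. split; [auto|split; [auto|right]].
    destruct (H1 st cv) as [r|r]; [intro; subst; contradiction|auto|].
    exfalso. pose proof (K1c cv (proj1 ct) r). pose proof (K1c (proj1 ct) cu q).
    pose proof (sh_lt st). pose proof (lo_hi u). lia.
  - intros [st [ct [q|q]]]; [subst; contradiction|]. split; [auto|split; [auto|right]].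
    destruct (H1 st cu) as [r|r]; [intro; subst; contradiction|auto|].
    exfalso. pose proof (K1c cu (proj1 ct) r). pose proof (K1c (proj1 ct) cv q).
    pose proof (sh_lt st). pose proof (lo_hi v). lia.
Qed.

Lemma P2 t q : sh t -> Co t -> Co q -> ~ sh q -> hi q = hi t -> cp q = cp t.
Proof.
  intros st [ct _] [cq _] sq e.
  assert (l : lt2 (p t) (p q)).
  { destruct (H1 st cq) as [r|r]; [intro; subst; contradiction|auto|].
    exfalso. pose proof (K1c cq ct r). pose proof (sh_lt st). lia. }
  unfold cp. apply cntl_ext. intros x _. unfold S. split.
  - intros [sx [cx [r|r]]]; [subst; contradiction|]. split; [auto|split; [auto|]].
    destruct (classic (x = t)) as [|n]; [left; auto|right].
    destruct (H1 sx ct n) as [r'|r']; auto.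
    exfalso. pose proof (K1c ct (proj1 cx) r'). pose proof (K1c (proj1 cx) cq r).
    pose proof (sh_lt sx). pose proof (lo_hi q). lia.
  - intros [sx [cx [r|r]]]; split; auto; split; auto; right.
    + subst; auto.
    + eapply lt2_trans; eauto.
Qed.

Lemma P3 t q : sh t -> Co t -> Co q -> ~ sh q -> hi q = lo t -> cp t = Nat.add (cp q) 1.
Proof.
  intros st [ct nt] [cq nq] sq e.
  assert (l : lt2 (p q) (p t)).
  { destruct (H1 st cq) as [r|r]; [intro; subst; contradiction| |auto].
    exfalso. pose proof (K1c ct cq r). pose proof (sh_lt st). pose proof (lo_hi q). lia. }
  unfold cp. apply (@cntl_plus1 T t).
  - intro x. unfold S. split.
    + intros [sx [cx [r|r]]]; [right; auto|left]. split; auto; split; auto; right.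
      destruct (H1 sx cq) as [r'|r']; [intro; subst; contradiction|auto|].
      exfalso. pose proof (K1c cq (proj1 cx) r'). pose proof (K1c (proj1 cx) ct r).
      pose proof (sh_lt sx). lia.
    + intros [[sx [cx [r|r]]]|r].
      * subst; contradiction.
      * split; auto; split; auto; right; eapply lt2_trans; eauto.
      * subst. split; auto; split; [split; auto|left; auto].
  - unfold S. intros [_ [_ [r|r]]]; [subst; contradiction|apply (lt2_asym l r)].
Qed.

Lemma P4 t t' : sh t -> sh t' -> Co t -> Co t' -> lt2 (p t) (p t') -> lo t' = hi t ->
  cp t' = Nat.add (cp t) 1.
Proof.
  intros st st' [ct nt] [ct' nt'] l e.
  unfold cp. apply (@cntl_plus1 T t').
  - intro x. unfold S. split.
    + intros [sx [cx [r|r]]]; [right; auto|left]. split; auto; split; auto.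
      destruct (classic (x = t)) as [|n]; [left; auto|right].
      destruct (H1 sx ct n) as [r'|r']; auto.
      exfalso. pose proof (K1c ct (proj1 cx) r'). pose proof (K1c (proj1 cx) ct' r).
      pose proof (sh_lt sx). lia.
    + intros [[sx [cx [r|r]]]|r].
      * subst. split; auto; split; auto.
      * split; auto; split; auto; right; eapply lt2_trans; eauto.
      * subst. split; auto; split; [split; auto|left; auto].
  - unfold S. intros [_ [_ [r|r]]].
    + subst. apply (lt2_irr l).
    + apply (lt2_asym l r).
Qed.

Definition rep (u : T) : pt :=
  let j := INR (lo u) in let h := INR (hi u) in
  if bP (sh u) then (if odd (cp u) then (3*h+1, -3*j+1) else (3*j, -3*h))
  else let a := sgm (fst (p u)) in let b := sgm (snd (p u)) in
       if odd (cp u) then (3*h + (1-a), -3*h + (1-b)) else (3*h + a, -3*h + b).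

Lemma rep_bounds u : 0 <= fst (rep u) <= 3 * INR (length W) + 1 /\
  - 3 * INR (length W) <= snd (rep u) <= 1.
Proof.
  pose proof (le_INR _ _ (hi_len u)). pose proof (le_INR _ _ (lo_hi u)).
  pose proof (pos_INR (lo u)). pose proof (sgm_bounds (fst (p u))). pose proof (sgm_bounds (snd (p u))).
  unfold rep. destruct (bP (sh u)); destruct (odd (cp u)); simpl; lra.
Qed.


Lemma bP_true (P : Prop) : P -> bP P = true.
Proof. apply bPT. Qed.
Lemma bP_false (P : Prop) : ~ P -> bP P = false.
Proof. apply bPF. Qed.

Lemma R_lt u v : Co u -> Co v -> lt2 (p u) (p v) ->
  (N u v <-> comp (rep u) (rep v)) /\ gp (rep u) (rep v).
Proof.
  intros cou cov l.
  destruct (K1 (proj1 cou) (proj1 cov) l) as [hle hN]. rewrite hN.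
  assert (sa : sgm (fst (p u)) < sgm (fst (p v))) by (apply sgm_lt; apply l).
  assert (sb : sgm (snd (p u)) < sgm (snd (p v))) by (apply sgm_lt; apply l).
  pose proof (sgm_bounds (fst (p u))). pose proof (sgm_bounds (fst (p v))).
  pose proof (sgm_bounds (snd (p u))). pose proof (sgm_bounds (snd (p v))).
  pose proof (lo_hi u) as lhu. pose proof (lo_hi v) as lhv.
  pose proof (pos_INR (lo u)). pose proof (pos_INR (lo v)).
  unfold rep.
  destruct (classic (sh u)) as [su|su]; destruct (classic (sh v)) as [sv|sv].
  - rewrite (bP_true su) (bP_true sv). pose proof (sh_lt su). pose proof (sh_lt sv).
    destruct (Nat.eq_dec (hi u) (lo v)) as [e|ne].
    + pose proof (P4 su sv cou cov l (Logic.eq_sym e)) as pc. rewrite pc odd_add1.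
      split; [split; [intros _|intros _; exact e]|]; rl; destruct (odd (cp u)); simpl; first [cmp_tac|gp_tac].
    + assert (hlt : (hi u < lo v)%coq_nat) by lia. rl.
      destruct (odd (cp u)); destruct (odd (cp v)); simpl;
        (split; [split; [intro; contradiction|ncmp_tac]|gp_tac]).
  - rewrite (bP_true su) (bP_false sv). pose proof (sh_lt su). pose proof (nsh_eq sv).
    destruct (Nat.eq_dec (hi u) (lo v)) as [e|ne].
    + assert (e' : hi v = hi u) by lia.
      pose proof (P2 su cou cov sv e') as pc. rewrite pc.
      split; [split; [intros _|intros _; exact e]|]; rl; destruct (odd (cp u)); simpl; first [cmp_tac|gp_tac].
    + assert (hlt : (hi u < lo v)%coq_nat) by lia. rl.
      destruct (odd (cp u)); destruct (odd (cp v)); simpl;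
        (split; [split; [intro; contradiction|ncmp_tac]|gp_tac]).
  - rewrite (bP_false su) (bP_true sv). pose proof (nsh_eq su). pose proof (sh_lt sv).
    destruct (Nat.eq_dec (hi u) (lo v)) as [e|ne].
    + pose proof (P3 sv cov cou su e) as pc. rewrite pc odd_add1.
      split; [split; [intros _|intros _; exact e]|]; rl; destruct (odd (cp u)); simpl; first [cmp_tac|gp_tac].
    + assert (hlt : (hi u < lo v)%coq_nat) by lia. rl.
      destruct (odd (cp u)); destruct (odd (cp v)); simpl;
        (split; [split; [intro; contradiction|ncmp_tac]|gp_tac]).
  - rewrite (bP_false su) (bP_false sv). pose proof (nsh_eq su). pose proof (nsh_eq sv).
    destruct (Nat.eq_dec (hi u) (lo v)) as [e|ne].
    + assert (e' : hi u = hi v) by lia.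
      pose proof (P1 cou cov su sv e') as pc. rewrite pc.
      split; [split; [intros _|intros _; exact e]|]; rl; destruct (odd (cp v)); simpl; first [cmp_tac|gp_tac].
    + assert (hlt : (hi u < lo v)%coq_nat) by lia. rl.
      destruct (odd (cp u)); destruct (odd (cp v)); simpl;
        (split; [split; [intro; contradiction|ncmp_tac]|gp_tac]).
Qed.


Lemma R_ul u v : Co u -> Co v -> ul (p u) (p v) ->
  (N u v <-> comp (rep u) (rep v)) /\ gp (rep u) (rep v).
Proof.
  intros cou cov l.
  assert (nu : u <> v) by (intro e; subst; apply (ul_irr l)).
  assert (su : ~ sh u).
  { intro su. destruct (H1 su (proj1 cov) nu) as [r|r]; pose proof (lt2_nul r); tauto. }
  assert (sv : ~ sh v).
  { intro sv. destruct (H1 sv (proj1 cou) (not_eq_sym nu)) as [r|r]; pose proof (lt2_nul r); tauto. }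
  assert (hN : ~ N u v) by (apply K2; try apply cou; try apply cov; auto).
  assert (sa : sgm (fst (p u)) < sgm (fst (p v))) by (apply sgm_lt; apply l).
  assert (sb : sgm (snd (p v)) < sgm (snd (p u))) by (apply sgm_lt; apply l).
  pose proof (sgm_bounds (fst (p u))). pose proof (sgm_bounds (fst (p v))).
  pose proof (sgm_bounds (snd (p u))). pose proof (sgm_bounds (snd (p v))).
  unfold rep. rewrite (bP_false su) (bP_false sv).
  destruct (Nat.eq_dec (hi u) (hi v)) as [e|ne].
  - rewrite (P1 cou cov su sv e). split; [split; [intro; contradiction|]|]; rl;
    destruct (odd (cp v)); simpl; first [ncmp_tac|gp_tac].
  - split; [split; [intro; contradiction|]|];
    (destruct (Nat.lt_total (hi u) (hi v)) as [hlt|[hlt|hlt]]; [|contradiction|]); rl;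
    destruct (odd (cp u)); destruct (odd (cp v)); simpl; first [ncmp_tac|gp_tac].
Qed.

Lemma R_all u v : u <> v -> Co u -> Co v ->
  (N u v <-> comp (rep u) (rep v)) /\ gp (rep u) (rep v).
Proof.
  intros nu cu cv.
  destruct (tetra (pgp nu)) as [h|[h|[h|h]]].
  - apply R_lt; auto.
  - destruct (R_lt cv cu h) as [h1 h2]. split; [|apply gp_sym; auto].
    split; intro q; [apply comp_sym, h1, N_sym, q|apply N_sym, h1, comp_sym, q].
  - apply R_ul; auto.
  - destruct (R_ul cv cu h) as [h1 h2]. split; [|apply gp_sym; auto].
    split; intro q; [apply comp_sym, h1, N_sym, q|apply N_sym, h1, comp_sym, q].
Qed.

End Comb.


Definition rho (a : pt) : pt := (fst a, - snd a).
Lemma rho_rho a : rho (rho a) = a.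
Proof. destruct a; unfold rho; simpl; f_equal; ring. Qed.
Lemma rho_inj a b : rho a = rho b -> a = b.
Proof. intro e. rewrite <- (rho_rho a), <- (rho_rho b), e. auto. Qed.
Lemma lt2_rho a b : lt2 (rho a) (rho b) <-> ul a b.
Proof. unfold lt2, ul, rho; simpl; lra. Qed.
Lemma ul_rho a b : ul (rho a) (rho b) <-> lt2 a b.
Proof. unfold lt2, ul, rho; simpl; lra. Qed.
Lemma gp_rho a b : gp (rho a) (rho b) <-> gp a b.
Proof. unfold gp, rho; simpl. split; intros [h1 h2]; split; auto; intro; apply h2; lra. Qed.
Lemma in_rho x W : In x (map rho W) <-> In (rho x) W.
Proof.
  rewrite in_map_iff. split.
  - intros [y [e h]]. subst. rewrite rho_rho. auto.
  - intro h. exists (rho x). rewrite rho_rho. auto.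
Qed.
Lemma eq_rho a b : rho a = rho b <-> a = b.
Proof. split; [apply rho_inj|intros ->; auto]. Qed.
Lemma Nw_rho w x y : Nw (rho w) (rho x) (rho y) <-> Nw w x y.
Proof. unfold Nw. rewrite !lt2_rho !ul_rho !eq_rho. tauto. Qed.

Section Rho.
Variable T : finType.
Variable p : T -> pt.
Variable W : list pt.
Definition pr (u : T) := rho (p u).
Definition Wr := map rho W.

Lemma N_rho u v : N pr Wr u v <-> N p W u v.
Proof.
  unfold N, pr, Wr. split; intros h w hw.
  - rewrite <- Nw_rho. apply h. apply in_rho. rewrite rho_rho; auto.
  - rewrite <- (rho_rho w). rewrite Nw_rho. apply h. apply in_rho in hw. auto.
Qed.
Lemma Cc_rho u : Cc pr Wr u <-> Ic p W u.
Proof.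
  unfold Cc, Ic, pr, Wr. split; intros h w hw.
  - rewrite <- (eq_rho w), <- (lt2_rho w), <- (lt2_rho (p u)). apply h. apply in_rho. rewrite rho_rho; auto.
  - apply in_rho in hw. rewrite <- (rho_rho w). rewrite eq_rho !lt2_rho. apply h. auto.
Qed.
Lemma Ic_rho u : Ic pr Wr u <-> Cc p W u.
Proof.
  unfold Cc, Ic, pr, Wr. split; intros h w hw.
  - rewrite <- (eq_rho w), <- (ul_rho w), <- (ul_rho (p u)). apply h. apply in_rho. rewrite rho_rho; auto.
  - apply in_rho in hw. rewrite <- (rho_rho w). rewrite eq_rho !ul_rho. apply h. auto.
Qed.
End Rho.

Arguments rep : simpl never.
Arguments sgm : simpl never.
Ltac cmp2 := first [left; unfold lt2; simpl; split; lra | right; unfold lt2; simpl; split; lra].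
Ltac ncmp2 := let c := fresh in intros [c|c]; unfold lt2 in c; simpl in c; lra.
Ltac gp2 := unfold gp; simpl; split; intro; lra.

Section Final.
Variable T : finType.
Variable p : T -> pt.
Variable W : list pt.
Hypothesis pgp : forall u v, u <> v -> gp (p u) (p v).

Definition LL := INR (length W).
Definition nrep (u : T) : pt :=
  if bP (Cc p W u /\ Ic p W u) then (sgm (fst (p u)) - 10, sgm (fst (p u)) - (6 * LL + 30))
  else if bP (Cc p W u) then rep p W u
  else if bP (Ic p W u) then (fst (rep (pr p) (Wr W) u) + 3 * LL + 5, snd (rep (pr p) (Wr W) u) - 3 * LL - 5)
  else (6 * LL + 10 + sgm (fst (p u)), - 6 * LL - 10 - sgm (fst (p u))).

Lemma nrep_B u : Cc p W u -> Ic p W u ->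
  nrep u = (sgm (fst (p u)) - 10, sgm (fst (p u)) - (6 * LL + 30)).
Proof. intros a b. unfold nrep. rewrite bP_true; auto. Qed.
Lemma nrep_C u : Cc p W u -> ~ Ic p W u -> nrep u = rep p W u.
Proof. intros a b. unfold nrep. rewrite bP_false; [|tauto]. rewrite bP_true; auto. Qed.
Lemma nrep_I u : ~ Cc p W u -> Ic p W u ->
  nrep u = (fst (rep (pr p) (Wr W) u) + 3 * LL + 5, snd (rep (pr p) (Wr W) u) - 3 * LL - 5).
Proof. intros a b. unfold nrep. rewrite bP_false; [|tauto]. rewrite bP_false; auto. rewrite bP_true; auto. Qed.
Lemma nrep_U u : ~ Cc p W u -> ~ Ic p W u ->
  nrep u = (6 * LL + 10 + sgm (fst (p u)), - 6 * LL - 10 - sgm (fst (p u))).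
Proof. intros a b. unfold nrep. rewrite bP_false; [|tauto]. rewrite !bP_false; auto. Qed.

Lemma Nclass u v : u <> v -> N p W u v -> (Cc p W u /\ Cc p W v) \/ (Ic p W u /\ Ic p W v).
Proof.
  intros nu h. destruct (tetra (pgp nu)) as [l|[l|[l|l]]].
  - left; apply (N1c h l).
  - left. destruct (N1c (N_sym h) l); auto.
  - right; apply (N1i h l).
  - right. destruct (N1i (N_sym h) l); auto.
Qed.

Lemma NB u v : Cc p W u -> Ic p W u -> N p W u v.
Proof. intros a b w hw. left. apply (CB a b hw). Qed.

Lemma pgp_rho u v : u <> v -> gp (pr p u) (pr p v).
Proof. intro h. unfold pr. apply gp_rho, pgp, h. Qed.

Lemma LL_pos : 0 <= LL.
Proof. apply pos_INR. Qed.

Lemma rep_rho_bounds u : 0 <= fst (rep (pr p) (Wr W) u) <= 3 * LL + 1 /\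
  - 3 * LL <= snd (rep (pr p) (Wr W) u) <= 1.
Proof. pose proof (rep_bounds (pr p) (Wr W) u). unfold Wr, LL in *. rewrite length_map in H. auto. Qed.

Lemma sgm_neq a b : a <> b -> sgm a <> sgm b.
Proof.
  intro h. destruct (Rtotal_order a b) as [l|[l|l]]; [|contradiction|];
  pose proof (sgm_lt l); lra.
Qed.

Lemma final_ok u v : u <> v -> (N p W u v <-> comp (nrep u) (nrep v)) /\ gp (nrep u) (nrep v).
Proof.
  intro nu.
  pose proof LL_pos.
  pose proof (pgp nu) as [g1 g2]. pose proof (sgm_neq g1).
  pose proof (sgm_bounds (fst (p u))). pose proof (sgm_bounds (fst (p v))).
  pose proof (rep_bounds p W u) as bu. pose proof (rep_bounds p W v) as bv.
  pose proof (rep_rho_bounds u) as ru. pose proof (rep_rho_bounds v) as rv.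
  fold LL in bu, bv.
  destruct (Rtotal_order (sgm (fst (p u))) (sgm (fst (p v)))) as [o|[o|o]]; [|contradiction|];
  assert (nc : ~ N p W u v -> ~ comp (nrep u) (nrep v) -> (N p W u v <-> comp (nrep u) (nrep v))) by tauto.
  all: destruct (classic (Cc p W u)) as [cu|cu]; destruct (classic (Ic p W u)) as [iu|iu];
  destruct (classic (Cc p W v)) as [cv|cv]; destruct (classic (Ic p W v)) as [iv|iv].
  all: try (assert (hN : N p W u v) by (apply NB; auto)).
  all: try (assert (hN : N p W u v) by (apply N_sym, NB; auto)).
  all: try (assert (hN : ~ N p W u v) by (intro q; destruct (Nclass nu q); tauto)).
  all: try first [rewrite (nrep_B cu iu) | rewrite (nrep_C cu iu) | rewrite (nrep_I cu iu) | rewrite (nrep_U cu iu)].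
  all: try first [rewrite (nrep_B cv iv) | rewrite (nrep_C cv iv) | rewrite (nrep_I cv iv) | rewrite (nrep_U cv iv)].
  all: try (split; [split; [intros _|intros _; exact hN]|]; [cmp2|gp2]).
  all: try (split; [split; [intro q; contradiction|intro c; exfalso; revert c; ncmp2]|gp2]).
  all: try (apply R_all; auto; split; auto; fail).
  all: destruct (@R_all T (pr p) (Wr W) pgp_rho u v nu) as [h1 h2].
  all: try (split; [apply Cc_rho; auto|rewrite Ic_rho; auto]).
  all: rewrite N_rho in h1; rewrite h1; split;
       [unfold comp, lt2; simpl; lra | unfold gp in *; simpl; split; intro; apply h2; lra].
Qed.
End Final.

Lemma ncomp_dom a b : gp a b ->
  (~ comp a b <-> dominates (rho a) (rho b) \/ dominates (rho b) (rho a)).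
Proof.
  intro g. destruct (tetra g) as [h|[h|[h|h]]]; unfold comp, dominates, rho, lt2, ul in *; simpl in *; lra.
Qed.

Lemma dom_lt2 a b : gp a b -> (dominates a b \/ dominates b a <-> comp a b).
Proof.
  intro g. destruct (tetra g) as [h|[h|[h|h]]]; unfold comp, dominates, lt2, ul, gp in *; simpl in *; lra.
Qed.

Lemma in_list (T : finType) (f : T -> pt) W u : In (f u) (map f (enum T) ++ W).
Proof. apply in_or_app; left; apply in_map, in_enum. Qed.

Theorem A_dir (T : finType) (G : rel T) f W : square_graph_rep G f W -> permutation_graph G.
Proof.
  intros [finj [gpos hG]].
  assert (pgp : forall u v, u <> v -> gp (f u) (f v)).
  { intros u v n. apply gpos; try apply in_list. intro e. apply n, finj, e. }
  assert (wgp : forall u w, In w W -> gpw w (f u)).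
  { intros u w hw. destruct (classic (w = f u)) as [e|n]; [left; auto|right].
    apply gpos; auto. apply in_or_app; right; auto. apply in_list. }
  exists (fun u => rho (nrep f W u)). split.
  - intros u v n. destruct (@final_ok T f W pgp u v n) as [_ g]. apply gp_rho in g. exact g.
  - intros u v n. destruct (@final_ok T f W pgp u v n) as [h g]. rewrite (hG u v n).
    rewrite sq_adj_iff; [|apply pgp, n|intros w hw; split; apply wgp; auto].
    rewrite <- ncomp_dom; auto. rewrite <- h. unfold N. split.
    + intros [w [hw hn]] hN. apply hn, hN, hw.
    + intro hn. apply NNPP. intro c. apply hn. intros w hw. apply NNPP. intro q. apply c. exists w; auto.
Qed.

Lemma QII x y : fst x < 0 -> 0 < snd x -> fst y < 0 -> 0 < snd y -> gp x y ->
  (~ Nw (0,0) x y <-> comp x y).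
Proof.
  intros h1 h2 h3 h4 g.
  assert (nx : (0,0) <> x) by (intro e; rewrite <- e in h1; simpl in h1; lra).
  assert (ny : (0,0) <> y) by (intro e; rewrite <- e in h3; simpl in h3; lra).
  destruct (tetra g) as [h|[h|[h|h]]].
  - rewrite (Nw_lt2 _ h). unfold comp, lt2 in *; simpl in *. split; [intros _; left; lra|].
    intros _ [q|[q|[q|q]]]; auto; lra.
  - rewrite Nw_sym_iff.
    rewrite (Nw_lt2 _ h). unfold comp, lt2 in *; simpl in *. split; [intros _; right; lra|].
    intros _ [q|[q|[q|q]]]; auto; lra.
  - rewrite (Nw_ul _ h). unfold comp, lt2, ul in *; simpl in *. split; [|lra].
    intro q; exfalso; apply q. right; right; right; lra.
  - rewrite Nw_sym_iff.
    rewrite (Nw_ul _ h). unfold comp, lt2, ul in *; simpl in *. split; [|lra].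
    intro q; exfalso; apply q. right; right; right; lra.
Qed.

Lemma sgm_lt_iff a b : sgm a < sgm b <-> a < b.
Proof.
  split; [|apply sgm_lt]. intro h. destruct (Rtotal_order a b) as [l|[l|l]]; auto.
  - subst; lra.
  - pose proof (sgm_lt l); lra.
Qed.

Theorem B_dir (T : finType) (G : rel T) : permutation_graph G ->
  exists f, square_graph_rep G f ((0,0) :: nil).
Proof.
  intros [g [gg hg]].
  set (f := fun u => (sgm (fst (g u)) - 1, sgm (snd (g u)))).
  assert (fb : forall u, fst (f u) < 0 /\ 0 < snd (f u)).
  { intro u; unfold f; simpl. pose proof (sgm_bounds (fst (g u))); pose proof (sgm_bounds (snd (g u))). lra. }
  assert (fgp : forall u v, u <> v -> gp (f u) (f v)).
  { intros u v n. destruct (gg u v n) as [h1 h2]. unfold f, gp; simpl.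
    pose proof (sgm_neq h1); pose proof (sgm_neq h2). split; intro; lra. }
  exists f. split; [|split].
  - intros u v e. apply NNPP. intro n. destruct (fgp u v n) as [h _]. apply h; rewrite e; auto.
  - intros a b ha hb nab.
    apply in_app_or in ha; apply in_app_or in hb.
    destruct ha as [ha|[ha|[]]]; destruct hb as [hb|[hb|[]]].
    + apply in_map_iff in ha; apply in_map_iff in hb.
      destruct ha as [u [<- _]]; destruct hb as [v [<- _]].
      apply fgp. intro e; apply nab; subst; auto.
    + apply in_map_iff in ha. destruct ha as [u [<- _]]. subst b.
      pose proof (fb u) as q; unfold f in *; simpl in *; split; intro; lra.
    + apply in_map_iff in hb. destruct hb as [v [<- _]]. subst a.
      pose proof (fb v) as q; unfold f in *; simpl in *; split; intro; lra.
    + subst; contradiction.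
  - intros u v n. rewrite (hg u v n).
    rewrite sq_adj_iff; [|apply fgp, n|intros w [<-|[]]; split; right;
       [pose proof (fb u) as q|pose proof (fb v) as q]; unfold f, gp in *; simpl in *; split; intro; lra].
    assert (e : (exists w, In w ((0,0) :: nil) /\ ~ Nw w (f u) (f v)) <-> ~ Nw (0,0) (f u) (f v)).
    { split; [intros [w [[<-|[]] h]]; auto|intro h; exists (0,0); split; [left|]; auto]. }
    rewrite e. destruct (fb u), (fb v). rewrite QII; auto.
    rewrite dom_lt2; [|apply gg, n].
    unfold comp, lt2, f; simpl. rewrite !sgm_lt_iff. pose proof (sgm_lt_iff (fst (g u)) (fst (g v))). pose proof (sgm_lt_iff (fst (g v)) (fst (g u))). split; intros [q|q]; [left|right|left|right]; split; try apply q; lra.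
Qed.

Unset Implicit Arguments.
Theorem mainTheorem10 (T : finType) (G : rel T)
  (Gsym : symmetric G) (Girr : irreflexive G) :
  ((exists (f : T -> pt) (W : list pt), square_graph_rep G f W) <-> permutation_graph G) /\
  (forall (f : T -> pt) (W : list pt), square_graph_rep G f W ->
     exists (f' : T -> pt) (W' : list pt),
       square_graph_rep G f' W' /\ (List.length W' <= 1)%nat).
Proof.
  split.
  - split.
    + intros [f [W h]]. apply (A_dir h).
    + intro h. destruct (B_dir h) as [f hf]. exists f, ((0,0) :: nil). exact hf.
  - intros f W h. destruct (B_dir (A_dir h)) as [f' hf]. exists f', ((0,0) :: nil).
    split; auto.
Qed.
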